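(* In the setting of the context, let $U>0$, $H=H_{\mathrm{hop}}+H_{\mathrm{int}}$ with $H_{\mathrm{int}}=U\sum_{v\in\mathcal{V}_L}n_{v,\uparrow}n_{v,\downarrow}$, and let the electron number be $N_e=|\mathcal{V}_L|-L$. Then the ferromagnetic state $\Phi_\uparrow=\big(\prod_{v\in\mathcal{V}_L^W}a^\dagger_{v,\uparrow}\big)\Phi_0$, in which every single-electron ground state of $H_{\mathrm{hop}}$ is occupied by one $\uparrow$-spin electron (total $S^{(3)}$ eigenvalue $N_e/2$), is a ground state of $H$, with energy $0$.
   Context: Construction. Let $G_l=(V_l,E_l)$, $l=1,\dots,L$, be complete graphs with $|V_l|\ge 2$. In each $V_l$ one vertex $v_l^0$ is painted black, the others white. Set $\mathcal{G}_1=G_1$. For $l=2,\dots,L$: choose an integer $z_l$ with $0<z_l\le |V_l|-1$, choose $z_l$ white vertices of $V_l$ and identify each with a vertex (black or white; distinct with distinct) of $\mathcal{V}_{l-1}$; $\mathcal{V}_l=\mathcal{V}_{l-1}\cup V_l$ with these identifications and $\mathcal{E}_l=\mathcal{E}_{l-1}\cup E_l$ (edges joining the same two vertices merged). A white vertex identified with a black one becomes black; two identified white vertices stay white; $v_l^0$ is never identified with an earlier vertex. The black vertices of $\mathcal{G}_L$ are exactly $v_1^0,\dots,v_L^0$; $\mathcal{V}_L^W$ is the set of white vertices; $V_l$ is regarded as a subset of $\mathcal{V}_L$. Weights: $w(v)=\#\{l: v\in V_l\}$, $w(e)=\#\{l: e\in E_l\}$. Directed edges $\vec{\mathcal{E}}_L=\bigcup_l\{(v,v_l^0):v\in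 V_l\setminus\{v_l^0\}\}$; directed paths, reachable set $R(v)$ (containing $v$ via the trivial path), and number $N(v\to u)$ of directed paths from $v$ to $u$ defined as usual; $|(v\to u)_j|$ is the number of vertices on the $j$-th path. Fermions $c_{v,\sigma}$ on $\mathcal{V}_L$ with canonical anticommutation relations, vacuum $\Phi_0$, $n_{v,\sigma}=c^\dagger_{v,\sigma}c_{v,\sigma}$. $H_{\mathrm{hop}}=\sum_{v,v'}\sum_\sigma t_{v,v'}c^\dagger_{v,\sigma}c_{v',\sigma}$ with $t_{v,v'}=w(e)t$ for $e=\{v,v'\}\in\mathcal{E}_L$, $t_{v,v}=w(v)t$, $0$ otherwise, $t>0$. For white $v$, $a_{v,\sigma}=\sum_{u\in R(v)}\big(\sum_{j=1}^{N(v\to u)}(-1)^{|(v\to u)_j|-1}\big)c_{u,\sigma}$. *)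

(* Defs.v *)
From HB Require Import structures.
From mathcomp Require Import all_boot all_order all_algebra.
Set Implicit Arguments. Unset Strict Implicit. Unset Printing Implicit Defensive.
Import Order.TTheory GRing.Theory Num.Theory.
Local Open Scope ring_scope.

(* The graph G_L.  Vertex set: a finType V.  The L complete graphs     *)
(* G_l are given by their vertex sets Vl l (as subsets of V_L), with   *)
(* black vertex b l = v_l^0.  Indices l : 'I_L, where l = 0 stands for *)
(* the paper's l = 1.                                                  *)

Definition construction (V : finType) (L : nat)
    (Vl : 'I_L -> {set V}) (b : 'I_L -> V) : Prop :=
  (0 < L)%N /\
  [/\
      forall l, (2 <= #|Vl l|)%N,
      forall l, b l \in Vl l,
      forall v, exists l, v \in Vl l,
      forall l k : 'I_L, (k < l)%N -> b l \notin Vl k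
    & (* for l >= 2, z_l > 0 vertices of V_l are identified with earlier ones *)
      forall l : 'I_L, (0 < l)%N ->
        exists k : 'I_L, (k < l)%N /\ (Vl l :&: Vl k != set0)].

Definition white (V : finType) (L : nat) (b : 'I_L -> V) : {set V} :=
  [set v | [forall l, v != b l]].

(* Weight: w(v) = #{l : v in V_l} for v = v', and w({v,v'}) = #{l : e in E_l}
   for v <> v' (since G_l is complete, {v,v'} in E_l iff v, v' in V_l);
   in particular it is 0 when {v,v'} is not an edge of G_L. *)
Definition weight (V : finType) (L : nat) (Vl : 'I_L -> {set V}) (v v' : V) : nat :=
  #|[set l | (v \in Vl l) && (v' \in Vl l)]|.

Definition dedge (V : finType) (L : nat) (Vl : 'I_L -> {set V}) (b : 'I_L -> V) :
    rel V :=
  fun v w => [exists l, [&& w == b l, v \in Vl l & v != b l]].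

(* Number of directed paths from v to u having k edges (k+1 vertices). *)
Definition npaths (V : finType) (L : nat) (Vl : 'I_L -> {set V}) (b : 'I_L -> V)
    (k : nat) (v u : V) : nat :=
  #|[set p : k.-tuple V | path (dedge Vl b) v p && (last v p == u)]|.

(* sum_j (-1)^(|(v -> u)_j| - 1) over all directed paths from v to u.
   The graph is acyclic under [construction], so a path has at most #|V|
   vertices, i.e. fewer than #|V| edges. *)
Definition acoef (C : numClosedFieldType) (V : finType) (L : nat)
    (Vl : 'I_L -> {set V}) (b : 'I_L -> V) (v u : V) : C :=
  \sum_(k < #|V|) (-1) ^+ k * (npaths Vl b k v u)%:R.

(* Fermionic Fock space over the modes (v, sigma), sigma = true for up, *)
(* false for down: functions on the occupation sets (Jordan-Wigner     *)
(* realization of the canonical anticommutation relations).            *)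

Definition fock (C : numClosedFieldType) (V : finType) :=
  {ffun {set (V * bool)} -> C}.

Definition jw (C : numClosedFieldType) (V : finType) (x : V * bool)
    (S : {set V * bool}) : C :=
  (-1) ^+ #|[set y in S | (enum_rank y < enum_rank x)%N]|.

Definition cdag (C : numClosedFieldType) (V : finType) (x : V * bool)
    (psi : fock C V) : fock C V :=
  [ffun S : {set V * bool} => if x \in S then jw C x S * psi (S :\ x) else 0].

Definition cann (C : numClosedFieldType) (V : finType) (x : V * bool)
    (psi : fock C V) : fock C V :=
  [ffun S : {set V * bool} => if x \in S then 0 else jw C x S * psi (x |: S)].

Definition numop (C : numClosedFieldType) (V : finType) (x : V * bool)
    (psi : fock C V) : fock C V := cdag x (cann x psi).

Definition fscale (C : numClosedFieldType) (V : finType) (a : C)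
    (psi : fock C V) : fock C V := [ffun S : {set V * bool} => a * psi S].

Definition vacuum (C : numClosedFieldType) (V : finType) : fock C V :=
  [ffun S : {set V * bool} => (S == set0)%:R].

Definition Hhop (C : numClosedFieldType) (V : finType) (L : nat)
    (Vl : 'I_L -> {set V}) (t : C) (psi : fock C V) : fock C V :=
  \sum_(v : V) \sum_(v' : V) \sum_(s : bool)
     fscale ((weight Vl v v')%:R * t) (cdag (v, s) (cann (v', s) psi)).

Definition Hint (C : numClosedFieldType) (V : finType) (U : C)
    (psi : fock C V) : fock C V :=
  \sum_(v : V) fscale U (numop (v, true) (numop (v, false) psi)).

Definition Hubbard (C : numClosedFieldType) (V : finType) (L : nat)
    (Vl : 'I_L -> {set V}) (t U : C) (psi : fock C V) : fock C V :=
  Hhop Vl t psi + Hint U psi.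

Definition adag_up (C : numClosedFieldType) (V : finType) (L : nat)
    (Vl : 'I_L -> {set V}) (b : 'I_L -> V) (v : V) (psi : fock C V) : fock C V :=
  \sum_(u | connect (dedge Vl b) v u) fscale (acoef C Vl b v u) (cdag (u, true) psi).

Definition Phi_up (C : numClosedFieldType) (V : finType) (L : nat)
    (Vl : 'I_L -> {set V}) (b : 'I_L -> V) : fock C V :=
  foldr (fun v psi => adag_up Vl b v psi) (vacuum C V) (enum (white b)).

Definition n_electron (C : numClosedFieldType) (V : finType) (N : nat)
    (psi : fock C V) : Prop :=
  forall S : {set V * bool}, #|S| != N -> psi S = 0.

(* Main.v *)
Require Import Defs.
From HB Require Import structures.
From mathcomp Require Import all_boot all_order all_algebra.
From mathcomp Require Import ring zify.
Set Implicit Arguments. Unset Strict Implicit. Unset Printing Implicit Defensive.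
Import Order.TTheory GRing.Theory Num.Theory.
Local Open Scope ring_scope.


Lemma card_sepU1 (T : finType) (x : T) (S : {set T}) (P : pred T) :
  x \notin S -> #|[set z in x |: S | P z]| = (P x + #|[set z in S | P z]|)%N.
Proof.
move=> xS; case Px: (P x).
  have -> : [set z in x |: S | P z] = x |: [set z in S | P z].
    by apply/setP=> z; rewrite !inE; case: (eqVneq z x) => [->|]; rewrite ?Px.
  by rewrite cardsU1 inE (negbTE xS).
rewrite add0n; apply: eq_card => z; rewrite !inE.
by case: (eqVneq z x) => [->|]; rewrite ?Px ?(negbTE xS) ?andbF.
Qed.

Lemma jw_U1 (C : numClosedFieldType) (V : finType) (x : V * bool) S : jw C x (x |: S) = jw C x S.
Proof.
rewrite /jw; congr (_ ^+ _); apply: eq_card => y; rewrite !inE.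
by case: (eqVneq y x) => [->|] //=; rewrite ltnn andbF.
Qed.

Lemma jw_D1 (C : numClosedFieldType) (V : finType) (x : V * bool) S : jw C x (S :\ x) = jw C x S.
Proof.
rewrite /jw; congr (_ ^+ _); apply: eq_card => y; rewrite !inE.
by case: (eqVneq y x) => [->|] //=; rewrite ltnn !andbF.
Qed.

Lemma jw_U1n (C : numClosedFieldType) (V : finType) (x y : V * bool) (S : {set V * bool}) : y \notin S ->
  jw C x (y |: S) = (-1) ^+ (enum_rank y < enum_rank x)%N * jw C x S.
Proof.
move=> yS; rewrite /jw card_sepU1 // exprD //.
Qed.

Lemma fock0E (C : numClosedFieldType) (V : finType) (S : {set V * bool}) :
  (0 : fock C V) S = 0.
Proof. by rewrite ffunE. Qed.

Lemma sgn2 (C : numClosedFieldType) (n : nat) : ((-1) ^+ n) * ((-1) ^+ n) = 1 :> C.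
Proof. by rewrite -exprMn mulrNN mulr1 expr1n. Qed.

Lemma anticomm (C : numClosedFieldType) (V : finType) (x y : V * bool) (psi : fock C V) :
  cann x (cdag y psi) = (if x == y then psi else 0) - cdag y (cann x psi).
Proof.
apply/ffunP => S; rewrite !ffunE.
case: (eqVneq x y) => [<-|xy].
  case xS: (x \in S).
    rewrite !inE eqxx /= setD1K // jw_D1 mulrA /jw sgn2 mul1r.
    by rewrite subrr.
  rewrite setU11 setU1K ?xS // jw_U1 mulrA /jw sgn2 mul1r.
  by rewrite subr0.
rewrite fock0E sub0r.
case xS: (x \in S).
  by case: (y \in S); rewrite ?ffunE ?inE ?xS ?andbT ?(negbTE xy) ?mulr0 ?oppr0.
rewrite inE in_set1 eq_sym (negbTE xy) /=.
case yS: (y \in S); last by rewrite mulr0 oppr0.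
rewrite !inE xS andbF.
have -> : (x |: S) :\ y = x |: (S :\ y).
  by apply/setP => z; rewrite !inE; case: (eqVneq z x) => // ->; rewrite (negbTE xy).
rewrite (jw_U1n _ _ (negbT xS)).
have -> : jw C x S = jw C x (y |: (S :\ y)) by rewrite setD1K.
rewrite (jw_U1n _ _ (negbT (setD11 y S))).
have : enum_rank x != enum_rank y by rewrite (inj_eq enum_rank_inj).
rewrite neq_ltn => /orP [] h; rewrite h ltnNge ltnW //=; 
 rewrite ?expr1 ?expr0; ring.
Qed.



Lemma b_inj (V : finType) (L : nat) (Vl : 'I_L -> {set V}) (b : 'I_L -> V) :
  construction Vl b -> injective b.
Proof.
case=> _ [_ hb _ hk _] l k blk; apply: val_inj.
case: (ltngtP (val l) (val k)) => // h.
  by have := hk k l h; rewrite -blk hb.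
by have := hk l k h; rewrite blk hb.
Qed.

Lemma dedge_b (V : finType) (L : nat) (Vl : 'I_L -> {set V}) (b : 'I_L -> V) u l :
  construction Vl b -> dedge Vl b u (b l) = (u \in Vl l) && (u != b l).
Proof.
move=> hc; apply/existsP/andP => [[l' /and3P [/eqP e1 h1 h2]]|[h1 h2]].
  by have ll := b_inj hc e1; subst l'; rewrite h1 h2.
by exists l; rewrite eqxx h1 h2.
Qed.

Lemma dedge_black (V : finType) (L : nat) (Vl : 'I_L -> {set V}) (b : 'I_L -> V) x y :
  dedge Vl b x y -> y \notin white b.
Proof.
case/existsP => l /and3P [/eqP -> _ _]; rewrite inE negb_forall.
by apply/existsP; exists l; rewrite eqxx.
Qed.

Definition mdepth (V : finType) (L : nat) (Vl : 'I_L -> {set V}) (v : V) :=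
  (\max_(l : 'I_L | v \in Vl l) (L - l))%N.
Definition pot (V : finType) (L : nat) (Vl : 'I_L -> {set V}) (b : 'I_L -> V) (v : V) :=
  (2 * mdepth Vl v + (v \in white b))%N.

Lemma pot_dec (V : finType) (L : nat) (Vl : 'I_L -> {set V}) (b : 'I_L -> V) x y :
  construction Vl b -> dedge Vl b x y -> (pot Vl b y < pot Vl b x)%N.
Proof.
move=> hc; have [_ [_ hb _ hk _]] := hc.
case/existsP => l /and3P [/eqP -> xl xb].
have m_b : (mdepth Vl (b l) <= L - l)%N.
  apply/bigmax_leqP => k bk; have: ~~ (k < l)%N.
    by apply/negP => kl; have := hk l k kl; rewrite bk.
  rewrite -leqNgt => lk; lia.
have m_x : (L - l <= mdepth Vl x)%N by apply: (@leq_bigmax_cond _ (fun l0 => x \in Vl l0) (fun l0 : 'I_L => (L - l0)%N) l xl).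
have wb : (b l \in white b) = false.
  by rewrite inE; apply/negbTE; rewrite negb_forall; apply/existsP; exists l; rewrite eqxx.
rewrite /pot wb.
case xw: (x \in white b); first by lia.
move: xw; rewrite inE => /negbT; rewrite negb_forall => /existsP [j]; rewrite negbK => /eqP xj.
have jl : (j < l)%N.
  have h1: ~~ (l < j)%N by apply/negP => lj; have := hk j l lj; rewrite -xj xl.
  have h2 : (nat_of_ord j != nat_of_ord l).
    by apply/negP => /eqP /val_inj jl; move: xb; rewrite xj jl eqxx.
  lia.
have m_x2 : (L - j <= mdepth Vl x)%N.
  by apply: (@leq_bigmax_cond _ (fun l0 => x \in Vl l0) (fun l0 : 'I_L => (L - l0)%N) j); rewrite xj hb.
rewrite !addn0; have := ltn_ord l; lia.
Qed.

Lemma path_size (V : finType) (L : nat) (Vl : 'I_L -> {set V}) (b : 'I_L -> V) v p :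
  construction Vl b -> path (dedge Vl b) v p -> (size p < #|V|)%N.
Proof.
move=> hc hp.
have hp2 : path (fun a c => c < a)%N (pot Vl b v) (map (pot Vl b) p).
  rewrite path_map; apply: sub_path hp => x y /= h; exact: pot_dec hc h.
have hu : uniq (pot Vl b v :: map (pot Vl b) p).
  apply: (@sorted_uniq _ (fun a c => c < a)%N) => //.
    by move=> x y z /= h1 h2; apply: ltn_trans h1.
  by move=> x /=; rewrite ltnn.
have hu2 : uniq (v :: p) by apply: (map_uniq (f := pot Vl b)).
by have := max_card (mem (v :: p)); rewrite (card_uniqP hu2).
Qed.

Lemma path_last_lt (V : finType) (L : nat) (Vl : 'I_L -> {set V}) (b : 'I_L -> V) p :
  construction Vl b -> forall v, path (dedge Vl b) v p -> p != [::] ->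
  (pot Vl b (last v p) < pot Vl b v)%N.
Proof.
move=> hc; elim: p => //= y p IH v /andP [evy py] _.
have hy := pot_dec hc evy.
case: p IH py => [|z p] IH py //=.
by apply: ltn_trans (IH y py isT) hy.
Qed.

Lemma npaths_big (V : finType) (L : nat) (Vl : 'I_L -> {set V}) (b : 'I_L -> V) k v u :
  construction Vl b -> (#|V| <= k)%N -> npaths Vl b k v u = 0%N.
Proof.
move=> hc hk; rewrite /npaths; apply/eqP; rewrite cards_eq0; apply/eqP/setP => p.
rewrite !inE; apply/negbTE/negP => /andP [hp _].
by have := path_size hc hp; rewrite size_tuple; lia.
Qed.

Lemma npaths0 (V : finType) (L : nat) (Vl : 'I_L -> {set V}) (b : 'I_L -> V) v u :
  npaths Vl b 0 v u = (v == u).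
Proof.
rewrite /npaths; case: eqP => [<-|nvu].
  have -> : [set p : 0.-tuple V | path (dedge Vl b) v p && (last v p == v)] = setT.
    by apply/setP => p; rewrite !inE (tuple0 p) /= eqxx.
  by rewrite cardsT card_tuple.
apply/eqP; rewrite cards_eq0; apply/eqP/setP => p.
by rewrite !inE (tuple0 p) /=; apply/negbTE/eqP.
Qed.

Lemma npaths_self (V : finType) (L : nat) (Vl : 'I_L -> {set V}) (b : 'I_L -> V) k w :
  construction Vl b -> (0 < k)%N -> npaths Vl b k w w = 0%N.
Proof.
move=> hc hk; rewrite /npaths; apply/eqP; rewrite cards_eq0; apply/eqP/setP => p.
rewrite !inE; apply/negbTE/negP => /andP [hp /eqP hl].
have hne : (p : seq V) != [::] by rewrite -size_eq0 size_tuple -lt0n.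
by have := path_last_lt hc hp hne; rewrite hl ltnn.
Qed.

Lemma npaths_conn (V : finType) (L : nat) (Vl : 'I_L -> {set V}) (b : 'I_L -> V) k v u :
  ~~ connect (dedge Vl b) v u -> npaths Vl b k v u = 0%N.
Proof.
move=> hn; rewrite /npaths; apply/eqP; rewrite cards_eq0; apply/eqP/setP => p.
rewrite !inE; apply/negbTE/negP => /andP [hp /eqP hl].
by move/negP: hn; apply; apply/connectP; exists p.
Qed.

Lemma npathsS (V : finType) (L : nat) (Vl : 'I_L -> {set V}) (b : 'I_L -> V) k v z :
  npaths Vl b k.+1 v z = (\sum_(u | dedge Vl b u z) npaths Vl b k v u)%N.
Proof.
set e := dedge Vl b.
pose B := [set q : k.-tuple V | path e v q && e (last v q) z].
pose f := fun q : k.-tuple V => [tuple of rcons q z].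
have finj : injective f.
  by move=> q1 q2 h; apply: val_inj; apply: (@rcons_injl _ z); exact: (congr1 val h).
have -> : npaths Vl b k.+1 v z = #|B|.
  rewrite /npaths -(card_imset _ finj); apply: eq_card => p; rewrite !inE.
  apply/idP/imsetP => [/andP [hp /eqP hl]|[q]].
    exists [tuple of behead (belast v p)].
      rewrite inE.
      case: p hp hl => [[|x s] /= sz]; first by [].
      move=> hp hl. by rewrite -hl -rcons_path -lastI.
    apply: val_inj => /=.
    case: p hp hl => [[|x s] /= sz]; first by [].
    by move=> _ <-; rewrite -lastI.
  rewrite inE => hq -> /=.
  by rewrite rcons_path last_rcons eqxx andbT.
rewrite -sum1_card (partition_big (fun q : k.-tuple V => last v q) (fun u => e u z)).
  apply: eq_bigr => u euz; rewrite /npaths -sum1_card; apply: eq_bigl => q.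
  rewrite !inE; apply/andP/andP => [[/andP [h1 _] h2]| [h1 h2]]; first by [].
  by rewrite h1 (eqP h2) euz.
by move=> q; rewrite inE => /andP [].
Qed.

Lemma acoef_self (C : numClosedFieldType) (V : finType) (L : nat) (Vl : 'I_L -> {set V}) (b : 'I_L -> V) w :
  construction Vl b -> acoef C Vl b w w = 1.
Proof.
move=> hc; rewrite /acoef.
have hV : (0 < #|V|)%N by apply/card_gt0P; exists w.
rewrite (bigD1 (Ordinal hV)) //= big1 ?addr0.
  by rewrite npaths0 eqxx expr0 mul1r.
move=> k hk; rewrite npaths_self ?mulr0 //.
by rewrite lt0n; apply: contra hk => /eqP h; apply/eqP/val_inj.
Qed.

Lemma acoef_conn (C : numClosedFieldType) (V : finType) (L : nat) (Vl : 'I_L -> {set V}) (b : 'I_L -> V) v u :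
  ~~ connect (dedge Vl b) v u -> acoef C Vl b v u = 0.
Proof.
by move=> hn; rewrite /acoef big1 // => k _; rewrite npaths_conn // mulr0.
Qed.

Lemma acoef_step (C : numClosedFieldType) (V : finType) (L : nat) (Vl : 'I_L -> {set V}) (b : 'I_L -> V) v z :
  construction Vl b -> v != z ->
  acoef C Vl b v z = - \sum_(u | dedge Vl b u z) acoef C Vl b v u.
Proof.
move=> hc vz; rewrite /acoef.
set n := #|V|.
pose g k : C := (-1) ^+ k * (npaths Vl b k v z)%:R.
have split : \sum_(k < n.+1) g k = g 0%N + \sum_(k < n) g k.+1 by rewrite big_ord_recl.
have split2 : \sum_(k < n.+1) g k = \sum_(k < n) g k + g n by rewrite big_ord_recr.
have g0 : g 0%N = 0 by rewrite /g npaths0 (negbTE vz) mulr0.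
have gn : g n = 0 by rewrite /g npaths_big ?mulr0.
have -> : \sum_(k < n) (-1) ^+ k * (npaths Vl b k v z)%:R = \sum_(k < n) g k.+1.
  by apply/eqP; rewrite -subr_eq0; apply/eqP; move: split split2; rewrite g0 gn add0r addr0 => -> ->; rewrite subrr.
rewrite exchange_big /= -sumrN; apply: eq_bigr => k _.
rewrite /g npathsS natr_sum mulr_sumr exprS mulN1r -sumrN.
by apply: eq_bigr => u _; rewrite mulNr.
Qed.

Lemma sum_Vl_zero (C : numClosedFieldType) (V : finType) (L : nat) (Vl : 'I_L -> {set V}) (b : 'I_L -> V) w l :
  construction Vl b -> w \in white b ->
  \sum_(u in Vl l) acoef C Vl b w u = 0.
Proof.
move=> hc hw; have [_ [_ hb _ _ _]] := hc.
rewrite (bigD1 (b l)) //= acoef_step //; last first.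
  by apply: contraTneq hw => ->; rewrite inE negb_forall; apply/existsP; exists l; rewrite eqxx.
rewrite addrC; apply/eqP; rewrite subr_eq0; apply/eqP; apply: eq_bigl => u.
by rewrite dedge_b.
Qed.



Lemma cdagD (C : numClosedFieldType) (V : finType) x (p q : fock C V) :
  cdag x (p + q) = cdag x p + cdag x q.
Proof. by apply/ffunP=> S; rewrite !ffunE; case: ifP => _; rewrite ?mulrDr ?addr0. Qed.
Lemma cdag0 (C : numClosedFieldType) (V : finType) x : cdag x (0 : fock C V) = 0.
Proof. by apply/ffunP=> S; rewrite !ffunE; case: ifP => _; rewrite ?mulr0. Qed.
Lemma cdagZ (C : numClosedFieldType) (V : finType) x a (p : fock C V) :
  cdag x (fscale a p) = fscale a (cdag x p).
Proof. by apply/ffunP=> S; rewrite !ffunE; case: ifP => _; rewrite ?mulr0 // mulrCA. Qed.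
Lemma cdag_sum (C : numClosedFieldType) (V : finType) x (I : Type) (r : seq I) (P : pred I) (F : I -> fock C V) :
  cdag x (\sum_(i <- r | P i) F i) = \sum_(i <- r | P i) cdag x (F i).
Proof. by elim/big_rec2: _ => [|i y1 y2 _ <-]; rewrite ?cdag0 ?cdagD. Qed.

Lemma cannD (C : numClosedFieldType) (V : finType) x (p q : fock C V) :
  cann x (p + q) = cann x p + cann x q.
Proof. by apply/ffunP=> S; rewrite !ffunE; case: ifP => _; rewrite ?mulrDr ?addr0. Qed.
Lemma cann0 (C : numClosedFieldType) (V : finType) x : cann x (0 : fock C V) = 0.
Proof. by apply/ffunP=> S; rewrite !ffunE; case: ifP => _; rewrite ?mulr0. Qed.
Lemma cannZ (C : numClosedFieldType) (V : finType) x a (p : fock C V) :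
  cann x (fscale a p) = fscale a (cann x p).
Proof. by apply/ffunP=> S; rewrite !ffunE; case: ifP => _; rewrite ?mulr0 // mulrCA. Qed.
Lemma cann_sum (C : numClosedFieldType) (V : finType) x (I : Type) (r : seq I) (P : pred I) (F : I -> fock C V) :
  cann x (\sum_(i <- r | P i) F i) = \sum_(i <- r | P i) cann x (F i).
Proof. by elim/big_rec2: _ => [|i y1 y2 _ <-]; rewrite ?cann0 ?cannD. Qed.

Lemma fscaleD (C : numClosedFieldType) (V : finType) a (p q : fock C V) :
  fscale a (p + q) = fscale a p + fscale a q.
Proof. by apply/ffunP=> S; rewrite !ffunE mulrDr. Qed.
Lemma fscale0 (C : numClosedFieldType) (V : finType) a : fscale a (0 : fock C V) = 0.
Proof. by apply/ffunP=> S; rewrite !ffunE mulr0. Qed.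
Lemma fscale0l (C : numClosedFieldType) (V : finType) (p : fock C V) : fscale 0 p = 0.
Proof. by apply/ffunP=> S; rewrite !ffunE mul0r. Qed.
Lemma fscale_sum (C : numClosedFieldType) (V : finType) a (I : Type) (r : seq I) (P : pred I) (F : I -> fock C V) :
  fscale a (\sum_(i <- r | P i) F i) = \sum_(i <- r | P i) fscale a (F i).
Proof. by elim/big_rec2: _ => [|i y1 y2 _ <-]; rewrite ?fscale0 ?fscaleD. Qed.
Lemma fscale_suml (C : numClosedFieldType) (V : finType) (I : Type) (r : seq I) (P : pred I) (F : I -> C) (p : fock C V) :
  fscale (\sum_(i <- r | P i) F i) p = \sum_(i <- r | P i) fscale (F i) p.
Proof.
apply/ffunP=> S; rewrite ffunE sum_ffunE mulr_suml.
by apply: eq_bigr => i _; rewrite ffunE.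
Qed.
Lemma fscaleM (C : numClosedFieldType) (V : finType) a c (p : fock C V) :
  fscale a (fscale c p) = fscale (a * c) p.
Proof. by apply/ffunP=> S; rewrite !ffunE mulrA. Qed.
Lemma fscale1 (C : numClosedFieldType) (V : finType) (p : fock C V) : fscale 1 p = p.
Proof. by apply/ffunP=> S; rewrite !ffunE mul1r. Qed.

Definition Bop (C : numClosedFieldType) (V : finType) (L : nat) (Vl : 'I_L -> {set V}) l s
  (psi : fock C V) : fock C V := \sum_(v in Vl l) cann (v, s) psi.

Lemma B_cdag (C : numClosedFieldType) (V : finType) (L : nat) (Vl : 'I_L -> {set V}) l u s (psi : fock C V) :
  Bop Vl l s (cdag (u, s) psi) = (if u \in Vl l then psi else 0) - cdag (u, s) (Bop Vl l s psi).
Proof.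
rewrite /Bop cdag_sum.
under eq_bigr do rewrite anticomm.
rewrite sumrB; congr (_ - _).
case: ifP => ul.
  rewrite (bigD1 u) //= big1 ?addr0 ?eqxx // => v /andP [_ vu].
  by rewrite xpair_eqE (negbTE vu).
by rewrite big1 // => v vl; rewrite xpair_eqE eqxx andbT; case: eqP => // vu; rewrite vu ul in vl.
Qed.

Lemma Bop_sum (C : numClosedFieldType) (V : finType) (L : nat) (Vl : 'I_L -> {set V}) l s (I : Type) (r : seq I) (P : pred I) (F : I -> fock C V) :
  Bop Vl l s (\sum_(i <- r | P i) F i) = \sum_(i <- r | P i) Bop Vl l s (F i).
Proof.
rewrite /Bop; under eq_bigr do rewrite cann_sum.
by rewrite exchange_big.
Qed.

Lemma BopZ (C : numClosedFieldType) (V : finType) (L : nat) (Vl : 'I_L -> {set V}) l s a (p : fock C V) :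
  Bop Vl l s (fscale a p) = fscale a (Bop Vl l s p).
Proof. by rewrite /Bop fscale_sum; apply: eq_bigr => v _; rewrite cannZ. Qed.

Lemma B_adag (C : numClosedFieldType) (V : finType) (L : nat) (Vl : 'I_L -> {set V}) (b : 'I_L -> V) l w (psi : fock C V) :
  Bop Vl l true psi = 0 ->
  Bop Vl l true (adag_up Vl b w psi) =
  fscale (\sum_(u | connect (dedge Vl b) w u && (u \in Vl l)) acoef C Vl b w u) psi.
Proof.
move=> hB; rewrite /adag_up Bop_sum fscale_suml big_mkcondr /=.
apply: eq_bigr => u _; rewrite BopZ B_cdag hB cdag0 subr0.
by case: ifP => _ //; rewrite fscale0.
Qed.

Lemma B_vac (C : numClosedFieldType) (V : finType) (L : nat) (Vl : 'I_L -> {set V}) l s :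
  Bop Vl l s (vacuum C V) = 0.
Proof.
rewrite /Bop big1 // => v _; apply/ffunP => S; rewrite !ffunE.
case: ifP => // _; case: eqP => [h|]; last by rewrite mulr0.
by have := setU11 (v, s) S; rewrite h inE.
Qed.

Lemma B_Phi_up (C : numClosedFieldType) (V : finType) (L : nat) (Vl : 'I_L -> {set V}) (b : 'I_L -> V) l s :
  construction Vl b -> all (mem (white b)) s ->
  Bop Vl l true (foldr (fun v psi => adag_up Vl b v psi) (vacuum C V) s) = 0.
Proof.
move=> hc; elim: s => [|w s IH] /=; first by rewrite B_vac.
case/andP => hw hs; rewrite B_adag ?IH //.
have -> : \sum_(u | connect (dedge Vl b) w u && (u \in Vl l)) acoef C Vl b w u =
          \sum_(u in Vl l) acoef C Vl b w u.
  rewrite big_mkcond [RHS]big_mkcond; apply: eq_bigr => u _.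
  case: (boolP (connect _ w u)) => //= hn; case: ifP => // _.
  by rewrite acoef_conn.
by rewrite sum_Vl_zero // fscale0l.
Qed.

Definition upsupp (C : numClosedFieldType) (V : finType) n (psi : fock C V) :=
  forall S : {set V * bool}, psi S != 0 -> (#|S| == n) && [forall x in S, x.2].

Lemma upsupp_vac (C : numClosedFieldType) (V : finType) : upsupp 0 (vacuum C V).
Proof.
move=> S; rewrite ffunE; case: (eqVneq S set0) => [->|]; last by rewrite eqxx.
by rewrite cards0 eqxx /=; move=> _; apply/forallP => x; rewrite inE.
Qed.

Lemma upsupp_adag (C : numClosedFieldType) (V : finType) (L : nat) (Vl : 'I_L -> {set V}) (b : 'I_L -> V) n (psi : fock C V) w :
  upsupp n psi -> upsupp n.+1 (adag_up Vl b w psi).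
Proof.
move=> hp S; apply: contraR => hn.
rewrite /adag_up sum_ffunE big1 // => u _; rewrite !ffunE.
case: ifP => uS; last by rewrite !mulr0.
case: (eqVneq (psi (S :\ (u,true))) 0) => [->|h]; first by rewrite !mulr0.
move/andP: (hp _ h) => [/eqP c /forallP f].
case/negP: hn; apply/andP; split.
  by rewrite (cardsD1 (u,true) S) uS c.
apply/forallP => x; apply/implyP => xS.
case: (eqVneq x (u,true)) => [->//|xu].
by have := f x; rewrite !inE xu xS.
Qed.

Lemma upsupp_Phi (C : numClosedFieldType) (V : finType) (L : nat) (Vl : 'I_L -> {set V}) (b : 'I_L -> V) s :
  upsupp (size s) (foldr (fun v psi => adag_up Vl b v psi) (vacuum C V) s).
Proof.
elim: s => [|w s IH] /=; first exact: upsupp_vac.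
exact: upsupp_adag.
Qed.

Lemma numopE (C : numClosedFieldType) (V : finType) x (psi : fock C V) :
  numop x psi = [ffun S : {set V * bool} => if x \in S then psi S else 0].
Proof.
apply/ffunP => S; rewrite !ffunE; case: ifP => xS //.
by rewrite !inE eqxx /= setD1K // jw_D1 mulrA /jw sgn2 mul1r.
Qed.

Lemma cann_down (C : numClosedFieldType) (V : finType) n (psi : fock C V) v :
  upsupp n psi -> cann (v, false) psi = 0.
Proof.
move=> hp; apply/ffunP => S; rewrite !ffunE; case: ifP => // _.
case: (eqVneq (psi ((v, false) |: S)) 0) => [->|h]; first by rewrite mulr0.
move/andP: (hp _ h) => [_ /forallP f].
by have := f (v, false); rewrite setU11.
Qed.

Lemma numop_down (C : numClosedFieldType) (V : finType) n (psi : fock C V) v :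
  upsupp n psi -> numop (v, false) psi = 0.
Proof. by move=> hp; rewrite /numop (cann_down v hp) cdag0. Qed.

Lemma B_down (C : numClosedFieldType) (V : finType) (L : nat) (Vl : 'I_L -> {set V}) l n (psi : fock C V) :
  upsupp n psi -> Bop Vl l false psi = 0.
Proof. by move=> hp; rewrite /Bop big1 // => v _; rewrite (cann_down v hp). Qed.

Lemma conn_black (V : finType) (L : nat) (Vl : 'I_L -> {set V}) (b : 'I_L -> V) w u :
  connect (dedge Vl b) w u -> u != w -> u \notin white b.
Proof.
case/connectP => p hp ->; case/lastP: p hp => [|p y] //=; first by rewrite eqxx.
rewrite rcons_path last_rcons => /andP [_ h] _.
exact: dedge_black h.
Qed.

Definition Sof (V : finType) (s : seq V) : {set V * bool} := [set x | x.2 && (x.1 \in s)].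

Lemma jw_neq0 (C : numClosedFieldType) (V : finType) x (S : {set V * bool}) : jw C x S != 0.
Proof. by rewrite /jw expf_neq0 // oppr_eq0 oner_eq0. Qed.

Lemma Phi_val (C : numClosedFieldType) (V : finType) (L : nat) (Vl : 'I_L -> {set V}) (b : 'I_L -> V) s :
  construction Vl b -> uniq s -> all (mem (white b)) s ->
  foldr (fun v psi => adag_up Vl b v psi) (vacuum C V) s (Sof s) != 0.
Proof.
move=> hc; elim: s => [|w s IH] /=.
  move=> _ _; have -> : Sof [::] = set0 :> {set V * bool}
    by apply/setP => x; rewrite !inE andbF.
  by rewrite ffunE eqxx oner_eq0.
case/andP => ws us /andP [hw hs].
rewrite /adag_up sum_ffunE (bigD1 w) ?connect0 //= big1 ?addr0.
  rewrite !ffunE acoef_self // mul1r inE /= mem_head.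
  have -> : Sof (w :: s) :\ (w, true) = Sof s.
    apply/setP => [[x sg]]; rewrite !inE /= xpair_eqE.
    case: (eqVneq x w) => [->|] /=; first by rewrite (negbTE ws); case: sg.
    by [].
  by rewrite mulf_neq0 ?jw_neq0 ?IH.
move=> u /andP [hu uw]; rewrite !ffunE inE /= in_cons (negbTE uw) /=.
case: ifP => us'; last by rewrite mulr0.
have h1 := conn_black hu uw; have h2 : u \in white b := allP hs u us'.
by rewrite h2 in h1.
Qed.



Lemma weightE (C : numClosedFieldType) (V : finType) (L : nat) (Vl : 'I_L -> {set V}) v v' :
  (weight Vl v v')%:R = \sum_(l | (v \in Vl l) && (v' \in Vl l)) (1 : C).
Proof.
rewrite /weight -sum1_card natr_sum; apply: eq_bigl => l; rewrite inE //.
Qed.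

Lemma Hhop_B (C : numClosedFieldType) (V : finType) (L : nat) (Vl : 'I_L -> {set V}) (t : C) (psi : fock C V) :
  Hhop Vl t psi = \sum_l \sum_s fscale t (\sum_(v in Vl l) cdag (v, s) (Bop Vl l s psi)).
Proof.
pose G l s v v' := if (v \in Vl l) && (v' \in Vl l) then fscale t (cdag (v, s) (cann (v', s) psi)) else 0.
have -> : Hhop Vl t psi = \sum_v \sum_v' \sum_s \sum_l G l s v v'.
  rewrite /Hhop; apply: eq_bigr => v _; apply: eq_bigr => v' _; apply: eq_bigr => s _.
  rewrite weightE mulr_suml fscale_suml big_mkcond; apply: eq_bigr => l _.
  by rewrite /G; case: ifP => _; rewrite ?mul1r.
under eq_bigr => v _ do under eq_bigr => v' _ do rewrite exchange_big.
under eq_bigr => v _ do rewrite exchange_big.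
rewrite exchange_big.
under eq_bigr => l _ do under eq_bigr => v _ do rewrite exchange_big.
under eq_bigr => l _ do rewrite exchange_big.
apply: eq_bigr => l _; apply: eq_bigr => s _.
rewrite fscale_sum [RHS]big_mkcond; apply: eq_bigr => v _.
rewrite /Bop cdag_sum fscale_sum.
case: ifP => vl; last by rewrite big1 // => v' _; rewrite /G vl.
rewrite [RHS]big_mkcond; apply: eq_bigr => v' _.
by rewrite /G vl /=; case: ifP.
Qed.

Definition ip (C : numClosedFieldType) (V : finType) (p q : fock C V) : C :=
  \sum_(S : {set V * bool}) (p S)^* * q S.

Lemma ip_sumr (C : numClosedFieldType) (V : finType) (p : fock C V) (I : Type) (r : seq I) (P : pred I) (F : I -> fock C V) :
  ip p (\sum_(i <- r | P i) F i) = \sum_(i <- r | P i) ip p (F i).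
Proof.
rewrite /ip exchange_big /=; apply: eq_bigr => S _.
by rewrite sum_ffunE mulr_sumr.
Qed.

Lemma ip_suml (C : numClosedFieldType) (V : finType) (p : fock C V) (I : Type) (r : seq I) (P : pred I) (F : I -> fock C V) :
  ip (\sum_(i <- r | P i) F i) p = \sum_(i <- r | P i) ip (F i) p.
Proof.
rewrite /ip exchange_big /=; apply: eq_bigr => S _.
by rewrite sum_ffunE rmorph_sum mulr_suml.
Qed.

Lemma ip_scaler (C : numClosedFieldType) (V : finType) (p q : fock C V) a :
  ip p (fscale a q) = a * ip p q.
Proof.
rewrite /ip mulr_sumr; apply: eq_bigr => S _; rewrite ffunE; ring.
Qed.

Lemma ip_ge0 (C : numClosedFieldType) (V : finType) (p : fock C V) : 0 <= ip p p.
Proof. by rewrite /ip sumr_ge0 // => S _; rewrite mulrC mul_conjC_ge0. Qed.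

Lemma ip_gt0 (C : numClosedFieldType) (V : finType) (p : fock C V) : p != 0 -> 0 < ip p p.
Proof.
move=> hp; have [S hS] : exists S, p S != 0.
  apply/existsP; apply: contraR hp => /existsPn h; apply/eqP/ffunP => S.
  by move/negbNE/eqP: (h S) => ->; rewrite ffunE.
rewrite /ip (bigD1 S) //= ltr_pwDl //.
  by rewrite mulrC mul_conjC_gt0.
by rewrite sumr_ge0 // => T _; rewrite mulrC mul_conjC_ge0.
Qed.

Lemma jw_conj (C : numClosedFieldType) (V : finType) x (S : {set V * bool}) : (jw C x S)^* = jw C x S.
Proof. by rewrite /jw rmorphXn rmorphN1. Qed.

Lemma conj_jwM (C : numClosedFieldType) (V : finType) x (S : {set V * bool}) (y : C) :
  (jw C x S * y)^* = jw C x S * y^*.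
Proof. by rewrite rmorphM /= jw_conj. Qed.

Lemma adjoint (C : numClosedFieldType) (V : finType) x (p q : fock C V) :
  ip p (cdag x q) = ip (cann x p) q.
Proof.
rewrite /ip.
pose h (S : {set V * bool}) := if x \in S then S :\ x else x |: S.
have hinv : involutive h.
  move=> S; rewrite /h; case: (boolP (x \in S)) => xS.
    by rewrite setD11 setD1K.
  by rewrite setU11 setU1K.
rewrite (reindex_inj (inv_inj hinv)) /=; apply: eq_bigr => S _.
rewrite !ffunE /h; case: ifP => xS.
  by rewrite setD11 rmorph0 mul0r mulr0.
rewrite setU11 setU1K ?xS // conj_jwM jw_U1; ring.
Qed.

Lemma ip_addr (C : numClosedFieldType) (V : finType) (p q r : fock C V) :
  ip p (q + r) = ip p q + ip p r.
Proof. by rewrite /ip -big_split /=; apply: eq_bigr => S _; rewrite ffunE mulrDr. Qed.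

Lemma Hhop_psd (C : numClosedFieldType) (V : finType) (L : nat) (Vl : 'I_L -> {set V}) (t : C) (psi : fock C V) :
  0 <= t -> 0 <= ip psi (Hhop Vl t psi).
Proof.
move=> ht; rewrite Hhop_B ip_sumr sumr_ge0 // => l _.
rewrite ip_sumr sumr_ge0 // => s _.
rewrite ip_scaler ip_sumr mulr_ge0 //.
under eq_bigr do rewrite adjoint.
by rewrite -ip_suml ip_ge0.
Qed.

Lemma Hint_psd (C : numClosedFieldType) (V : finType) (U : C) (psi : fock C V) :
  0 <= U -> 0 <= ip psi (Hint U psi).
Proof.
move=> hU; rewrite /Hint ip_sumr sumr_ge0 // => v _.
rewrite ip_scaler mulr_ge0 // !numopE /ip sumr_ge0 // => S _; rewrite !ffunE.
by case: ifP => _; first case: ifP => _; rewrite ?mulr0 // mulrC mul_conjC_ge0.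
Qed.
Lemma white_card (V : finType) (L : nat) (Vl : 'I_L -> {set V}) (b : 'I_L -> V) :
  construction Vl b -> #|white b| = (#|V| - L)%N.
Proof.
move=> hc.
have -> : white b = ~: [set b l | l : 'I_L].
  apply/setP => v; rewrite inE in_setC; apply/forallP/negP => [h /imsetP [l _ e]|h l].
    by move: (h l); rewrite e eqxx.
  by apply/eqP => e; apply: h; apply/imsetP; exists l.
have := cardsC [set b l | l : 'I_L]; rewrite card_imset; last exact: b_inj hc.
rewrite card_ord; lia.
Qed.


Unset Implicit Arguments.


Theorem proposition2 (C : numClosedFieldType) (V : finType) (L : nat)
    (Vl : 'I_L -> {set V}) (b : 'I_L -> V) (t U : C) :
  construction Vl b -> 0 < t -> 0 < U ->
  let Ne := (#|V| - L)%N in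
  let Phi := Phi_up C Vl b in
  [/\ Phi != 0,
      n_electron Ne Phi,
      Hubbard Vl t U Phi = 0
    & forall (E : C) (psi : fock C V),
        n_electron Ne psi -> psi != 0 ->
        Hubbard Vl t U psi = fscale E psi -> 0 <= E].
Proof.
move=> hc ht hU Ne Phi.
have hall : all (mem (white b)) (enum (white b)) by apply/allP => x; rewrite mem_enum.
have hsup : upsupp (size (enum (white b))) Phi by exact: upsupp_Phi.
have hsz : size (enum (white b)) = Ne by rewrite -cardE (white_card hc).
rewrite hsz in hsup.
split.
- apply/eqP => h.
  have := @Phi_val C V L Vl b _ hc (enum_uniq (mem (white b))) hall.
  by rewrite -/(Phi_up C Vl b) -/Phi h ffunE eqxx.
- move=> S hS; apply/eqP; apply: contraR hS => h.
  by case/andP: (hsup S h) => ->.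
- rewrite /Hubbard; have -> : Hint U Phi = 0.
    by rewrite /Hint big1 // => v _; rewrite (numop_down v hsup) /numop cann0 cdag0 fscale0.
  rewrite addr0 Hhop_B.
  rewrite big1 // => l _; rewrite big1 // => s _.
  have -> : Bop Vl l s Phi = 0.
    by case: s; [exact: B_Phi_up | exact: B_down hsup].
  by rewrite big1 ?fscale0 // => v _; rewrite cdag0.
- move=> E psi _ hpsi hE.
  have := congr1 (ip psi) hE; rewrite ip_scaler /Hubbard ip_addr => hE2.
  have h0 : 0 <= E * ip psi psi.
    by rewrite -hE2 addr_ge0 ?Hhop_psd ?Hint_psd ?ltW.
  by rewrite -(pmulr_lge0 _ (ip_gt0 hpsi)).
Qed.
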